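(* The algebra $\mathcal{A}_{+++}$ is the unital algebra generated by $\tilde k,\tilde l,\tilde p,\tilde q,r,\tilde m,\tilde n,\tilde s,\tilde t$ subject exactly to the $40$ relations $xy=yx=0$ for all $x\in X_1=\{\tilde k,\tilde l,\tilde p,\tilde q,r\}$ and $y\in X_2=\{\tilde m,\tilde n,\tilde s,\tilde t\}$. Consequently, there are no relations among the generators in $X_1$ nor among those in $X_2$, and $\mathcal{A}_{+++}$ is isomorphic to the fibre product $\{(f,g)\in \mathbb{C}\langle X_1\rangle\times\mathbb{C}\langle X_2\rangle : f(0)=g(0)\}$, where $\mathbb{C}\langle X_i\rangle$ is the free unital algebra on $X_i$ and $f(0)$ denotes the constant term.
   Context: Work over $\mathbb{C}$. For $\epsilon_a,\epsilon_b,\epsilon_c\in\{\pm1\}$ let $a_+=b_+=c_+=\tfrac12$, $a_-=\tfrac{\epsilon_a}{2}$, $b_-=\tfrac{\epsilon_b}{2}$, $c_-=\tfrac{\epsilon_c}{2}$. In the ordered basis $e_1\otimes e_1,e_1\otimes e_2,e_1\otimes e_3,e_2\otimes e_1,\dots,e_3\otimes e_3$ of $\mathbb{C}^3\otimes\mathbb{C}^3$ let $$\widehat R=\begin{pmatrix} a_+&0&0&0&0&0&0&0&a_-\\ 0&b_+&0&0&0&0&0&b_-&0\\ 0&0&a_+&0&0&0&a_-&0&0\\ 0&0&0&c_+&0&c_-&0&0&0\\ 0&0&0&0&1&0&0&0&0\\ 0&0&0&c_-&0&c_+&0&0&0\\ 0&0&a_-&0&0&0&a_+&0&0\\ 0&b_-&0&0&0&0&0&b_+&0\\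 a_-&0&0&0&0&0&0&0&a_+\end{pmatrix},$$ and $R=P\widehat R$ with $P$ the flip $e_i\otimes e_j\mapsto e_j\otimes e_i$. Let $T=\begin{pmatrix}k&p&l\\ q&r&s\\ m&t&n\end{pmatrix}$, $T_1=T\otimes I_3$, $T_2=I_3\otimes T$, and let $\mathcal{A}_{\epsilon_a\epsilon_b\epsilon_c}$ be the unital associative algebra generated by $k,l,m,n,p,q,r,s,t$ subject to $R\,T_1T_2=T_2T_1R$. $\mathcal{A}_{+++}$ denotes the case $\epsilon_a=\epsilon_b=\epsilon_c=+1$. New generators: $\tilde k=\tfrac12(k+n)$, $\tilde n=\tfrac12(k-n)$, $\tilde l=\tfrac12(l+m)$, $\tilde m=\tfrac12(l-m)$, $\tilde p=\tfrac12(p+t)$, $\tilde t=\tfrac12(p-t)$, $\tilde q=\tfrac12(q+s)$, $\tilde s=\tfrac12(q-s)$. *)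

(* Defs.v *)
From HB Require Import structures.
From mathcomp Require Import all_boot all_order all_algebra.
Set Implicit Arguments. Unset Strict Implicit. Unset Printing Implicit Defensive.
Import Order.TTheory GRing.Theory Num.Theory.
Local Open Scope ring_scope.

Section Defs.
Variable F : numClosedFieldType.

Definition alg_hom (A B : algType F) (f : A -> B) : Prop :=
  [/\ forall x y, f (x + y) = f x + f y,
      forall x y, f (x * y) = f x * f y,
      f 1 = 1 &
      forall (c : F) x, f (c *: x) = c *: f x].

Inductive generated (A : algType F) (n : nat) (g : 'I_n -> A) : A -> Prop :=
  | gen_gen i : generated g (g i)
  | gen_scal (c : F) : generated g (c%:A)
  | gen_add x y : generated g x -> generated g y -> generated g (x + y)
  | gen_mul x y : generated g x -> generated g y -> generated g (x * y).

(* (A, g) is the unital F-algebra generated by g subject exactly to rel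
   (universal property of the presented algebra). *)
Definition presents (n : nat) (rel : forall B : algType F, ('I_n -> B) -> Prop)
  (A : algType F) (g : 'I_n -> A) : Prop :=
  [/\ rel A g,
      forall x, generated g x &
      forall (B : algType F) (h : 'I_n -> B), rel B h ->
        exists f : A -> B, alg_hom f /\ forall i, f (g i) = h i].

Definition free_on (n : nat) (A : algType F) (g : 'I_n -> A) : Prop :=
  presents (fun B _ => True) g.

(* basis index of e_a (x) e_b is 3a+b; a = i %/ 3, b = i %% 3 *)
Definition Rhat (ea eb ec : F) : 'M[F]_9 :=
  \matrix_(i < 9, j < 9)
    if i == j then (if (i == 4%N :> nat) then 1 else 2^-1)
    else if ((i + j)%N == 8%N) then
      (if (i == 0%N :> nat) || (i == 2%N :> nat) || (i == 6%N :> nat) || (i == 8%N :> nat) then ea / 2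
       else if (i == 1%N :> nat) || (i == 7%N :> nat) then eb / 2
       else ec / 2)
    else 0.

(* flip e_a (x) e_b |-> e_b (x) e_a *)
Definition Pflip : 'M[F]_9 :=
  \matrix_(i < 9, j < 9) if (j == 3 * (i %% 3) + i %/ 3 :> nat)%N then 1 else 0.

Definition Rmat (ea eb ec : F) : 'M[F]_9 := Pflip *m Rhat ea eb ec.

(* T = [[k,p,l],[q,r,s],[m,t,n]] from a family indexed row-major *)
Definition Tmat (B : algType F) (g : 'I_9 -> B) : 'M[B]_3 :=
  \matrix_(a < 3, c < 3) g (inord (3 * a + c)).

Definition T1 (B : algType F) (T : 'M[B]_3) : 'M[B]_9 :=
  \matrix_(i < 9, j < 9)
    if (i %% 3 == j %% 3)%N then T (inord (i %/ 3)) (inord (j %/ 3)) else 0.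

Definition T2 (B : algType F) (T : 'M[B]_3) : 'M[B]_9 :=
  \matrix_(i < 9, j < 9)
    if (i %/ 3 == j %/ 3)%N then T (inord (i %% 3)) (inord (j %% 3)) else 0.

Definition RTT_rel (ea eb ec : F) (B : algType F) (g : 'I_9 -> B) : Prop :=
  let R := map_mx (fun c : F => c%:A) (Rmat ea eb ec) : 'M[B]_9 in
  let T := Tmat g in
  R *m T1 T *m T2 T = T2 T *m T1 T *m R.

Definition gensT (B : algType F) (k l m n p q r s t : B) : 'I_9 -> B :=
  fun i => nth 0 [:: k; p; l; q; r; s; m; t; n] i.

(* new generators, ordered X1 = (k~,l~,p~,q~,r), X2 = (m~,n~,s~,t~) *)
Definition gensTilde (B : algType F) (k l m n p q r s t : B) : 'I_9 -> B :=
  fun i => nth 0 [:: 2^-1 *: (k + n); 2^-1 *: (l + m); 2^-1 *: (p + t);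
                     2^-1 *: (q + s); r;
                     2^-1 *: (l - m); 2^-1 *: (k - n); 2^-1 *: (q - s);
                     2^-1 *: (p - t)] i.

Definition X1 (B : algType F) (g : 'I_9 -> B) : 'I_5 -> B :=
  fun i => g (lshift 4 i).
Definition X2 (B : algType F) (g : 'I_9 -> B) : 'I_4 -> B :=
  fun j => g (rshift 5 j).

Definition rel40 (B : algType F) (g : 'I_9 -> B) : Prop :=
  forall (i : 'I_5) (j : 'I_4), X1 g i * X2 g j = 0 /\ X2 g j * X1 g i = 0.

End Defs.

(* Main.v *)
Require Import Defs.
From HB Require Import structures.
From mathcomp Require Import all_boot all_order all_algebra.
Import GRing.Theory.
Local Open Scope ring_scope.

Section Alg.
Variable F : numClosedFieldType.
Variable B : algType F.

Lemma two_neq0 : (2%:R : F) != 0.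
Proof. by rewrite Num.Theory.pnatr_eq0. Qed.

Lemma half_double (u : B) : 2^-1 *: (u + u) = u.
Proof.
by rewrite -mulr2n -scaler_nat scalerA mulVf ?two_neq0 // scale1r.
Qed.

Lemma half_pp (u v : B) : 2^-1 *: ((u + v) + (u - v)) = u.
Proof. by rewrite addrACA subrr addr0 half_double. Qed.

Lemma half_mm (u v : B) : 2^-1 *: ((u + v) - (u - v)) = v.
Proof. by rewrite opprB addrC addrA subrK half_double. Qed.

Lemma half_split (u v : B) : u = 2^-1 *: (u + v) + 2^-1 *: (u - v).
Proof. by rewrite -scalerDr half_pp. Qed.

Lemma half_split2 (u v : B) : v = 2^-1 *: (u + v) - 2^-1 *: (u - v).
Proof. by rewrite -scalerBr half_mm. Qed.

Variable T : 'I_3 -> 'I_3 -> B.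
Local Notation s := (@rev_ord 3).
Definition xT a c := 2^-1 *: (T a c + T (s a) (s c)).
Definition yT a c := 2^-1 *: (T a c - T (s a) (s c)).

Definition Q1 := forall a b c d : 'I_3, T (s b) c * T (s a) d = T b (s c) * T a (s d).
Definition Q2 := forall a c b d : 'I_3, xT a c * yT b d = 0 /\ yT a c * xT b d = 0.

Lemma Q1_Q1' : Q1 -> forall a c b d, T (s a) (s c) * T (s b) (s d) = T a c * T b d.
Proof.
move=> H a c b d.
by have := H b a (s c) (s d); rewrite !rev_ordK.
Qed.

Lemma Q1_equiv : Q1 <-> Q2.
Proof.
split.
- move=> H1; have H := Q1_Q1' H1.
  move=> a c b d.
  have E1 := H a c b d.
  have E2 : T a c * T (s b) (s d) = T (s a) (s c) * T b d.
    by have := H (s a) (s c) b d; rewrite !rev_ordK.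
  rewrite /xT /yT -!scalerAr -!scalerAl !scalerA.
  rewrite !mulrDl !mulrDr !mulrN !mulNr E1 E2.
  split; apply/eqP; rewrite scaler_eq0; apply/orP; right.
    by rewrite addrA subrK subrr.
  by rewrite addrA addrK subrr.
- move=> H2 a b c d.
  have HT : forall a c, T a c = xT a c + yT a c by move=> a' c'; apply: half_split.
  have HS : forall a c, T (s a) (s c) = xT a c - yT a c by move=> a' c'; apply: half_split2.
  have := HS b (s c); rewrite rev_ordK => ->.
  have := HS a (s d); rewrite rev_ordK => ->.
  rewrite (HT b) (HT a).
  have [h1 h2] := H2 b (s c) a (s d).
  rewrite !mulrDl !mulrDr !mulrNN !mulrN !mulNr h1 h2 !oppr0 !addr0 !add0r.
  done.
Qed.
End Alg.
Arguments Q1 {F B}.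
Arguments Q2 {F B}.
Arguments xT {F B}.
Arguments yT {F B}.
Arguments two_neq0 {F}.
Arguments half_double {F B}.
Arguments half_pp {F B}.
Arguments half_mm {F B}.
Arguments half_split {F B}.
Arguments half_split2 {F B}.
Lemma N1 {x y : nat} : (x < 3)%N -> (y < 3)%N ->
  [&& (3*x+y < 9)%N, ((3*x+y)%/3 == x)%N & ((3*x+y) %% 3 == y)%N].
Proof. by case: x => [|[|[|x]]] //; case: y => [|[|[|y]]]. Qed.

Lemma N2 {i : nat} : (i < 9)%N ->
  [&& (i %/ 3 < 3)%N, (i %% 3 < 3)%N, (3 * (i %/ 3) + i %% 3 == i)%N,
      ((8 - i) %/ 3 == 2 - i %/ 3)%N & ((8 - i) %% 3 == 2 - i %% 3)%N].
Proof. by do 9?case: i => [|i] //. Qed.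

Lemma N1a {x y} : (x < 3)%N -> (y < 3)%N -> (3*x+y < 9)%N.
Proof. by move=> hx hy; case/and3P: (N1 hx hy). Qed.
Lemma N1b {x y} : (x < 3)%N -> (y < 3)%N -> ((3*x+y)%/3 = x)%N.
Proof. by move=> hx hy; case/and3P: (N1 hx hy) => _ /eqP. Qed.
Lemma N1c {x y} : (x < 3)%N -> (y < 3)%N -> ((3*x+y)%%3 = y)%N.
Proof. by move=> hx hy; case/and3P: (N1 hx hy) => _ _ /eqP. Qed.
Lemma N2a (i : 'I_9) : (i %/ 3 < 3)%N.
Proof. by case/and5P: (N2 (ltn_ord i)). Qed.
Lemma N2b (i : 'I_9) : (i %% 3 < 3)%N.
Proof. by case/and5P: (N2 (ltn_ord i)). Qed.
Lemma N2c {i : nat} : (i < 9)%N -> (3 * (i %/ 3) + i %% 3 = i)%N.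
Proof. by move=> h; case/and5P: (N2 h) => _ _ /eqP. Qed.
Lemma N2d (i : 'I_9) : ((rev_ord i) %/ 3 = 2 - i %/ 3)%N.
Proof. by case/and5P: (N2 (ltn_ord i)) => _ _ _ /eqP. Qed.
Lemma N2e (i : 'I_9) : ((rev_ord i) %% 3 = 2 - i %% 3)%N.
Proof. by case/and5P: (N2 (ltn_ord i)) => _ _ _ _ /eqP. Qed.

Section Mat.
Variable F : numClosedFieldType.
Variable B : algType F.

Lemma ord9_eq {b : 'I_9} {x y} : (x < 3)%N -> (y < 3)%N ->
  (b %/ 3 = x)%N -> (b %% 3 = y)%N -> b = inord (3 * x + y).
Proof.
move=> hx hy h1 h2; apply/val_inj; rewrite /= inordK ?N1a //.
by rewrite -h1 -h2 N2c.
Qed.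

Lemma mulT12 (T : 'M[B]_3) (i j : 'I_9) :
  (T1 T *m T2 T) i j = T (inord (i %/ 3)) (inord (j %/ 3)) * T (inord (i %% 3)) (inord (j %% 3)).
Proof.
rewrite mxE (bigD1 (inord (3 * (j %/ 3) + i %% 3))) //= big1 ?addr0.
  by rewrite !mxE inordK ?N1a ?N2a ?N2b // N1b ?N1c ?N2a ?N2b // !eqxx.
move=> b hb; rewrite !mxE; case: eqP => h1; last by rewrite mul0r.
case: eqP => h2; last by rewrite mulr0.
by move: hb; rewrite (ord9_eq (N2a j) (N2b i) h2 (esym h1)) eqxx.
Qed.

Lemma mulT21 (T : 'M[B]_3) (i j : 'I_9) :
  (T2 T *m T1 T) i j = T (inord (i %% 3)) (inord (j %% 3)) * T (inord (i %/ 3)) (inord (j %/ 3)).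
Proof.
rewrite mxE (bigD1 (inord (3 * (i %/ 3) + j %% 3))) //= big1 ?addr0.
  by rewrite !mxE inordK ?N1a ?N2a ?N2b // N1b ?N1c ?N2a ?N2b // !eqxx.
move=> b hb; rewrite !mxE; case: eqP => h1; last by rewrite mul0r.
case: eqP => h2; last by rewrite mulr0.
by move: hb; rewrite (ord9_eq (N2a i) (N2b j) (esym h1) h2) eqxx.
Qed.
End Mat.

Definition pi9 (i : 'I_9) : 'I_9 := inord (3 * (i %% 3) + i %/ 3).

Lemma pi9_val i : (nat_of_ord (pi9 i) = 3 * (i %% 3) + i %/ 3)%N.
Proof. by rewrite /pi9 inordK // N1a ?N2a ?N2b. Qed.
Lemma pi9_div i : ((pi9 i) %/ 3 = i %% 3)%N.
Proof. by rewrite pi9_val N1b ?N2a ?N2b. Qed.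
Lemma pi9_mod i : ((pi9 i) %% 3 = i %/ 3)%N.
Proof. by rewrite pi9_val N1c ?N2a ?N2b. Qed.
Lemma pi9K : cancel pi9 pi9.
Proof. by move=> i; apply/val_inj; rewrite /= pi9_val pi9_div pi9_mod N2c. Qed.
Lemma pi9_eq (a j : 'I_9) : (j == pi9 a) = (a == pi9 j).
Proof. by rewrite -{1}(pi9K j) (inj_eq (can_inj pi9K)) eq_sym. Qed.
Lemma rev9_eq (u a : 'I_9) : (a == rev_ord u) = (u + a == 8)%N.
Proof.
have hu : (u <= 8)%N by rewrite -ltnS.
rewrite -val_eqE /= subSS; apply/eqP/eqP => h.
  by rewrite h subnKC.
by apply/eqP; rewrite -(eqn_add2l u) subnKC // h.
Qed.
Lemma inord_rev (x : nat) : (x < 3)%N -> inord (2 - x) = rev_ord (inord x : 'I_3).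
Proof. by move=> h; apply/val_inj; rewrite /= !inordK // ltnS leq_subr. Qed.

Section Mat2.
Variable F : numClosedFieldType.
Variable B : algType F.

Lemma RhatE (u a : 'I_9) :
  Rhat (1 : F) 1 1 u a = 2^-1 * ((a == u)%:R + (a == rev_ord u)%:R).
Proof.
rewrite mxE !if_same rev9_eq div1r.
case: (a =P u) => [->|hau].
  rewrite eqxx.
  have -> : (u + u == 8)%N = (u == 4%N :> nat).
    by case: u => [[|[|[|[|[|[|[|[|[|u]]]]]]]]] hu].
  case: (u == 4%N :> nat); last by rewrite addr0 mulr1.
  by rewrite mulVf // Num.Theory.pnatr_eq0.
have -> : (u == a) = false by apply/eqP => h; apply: hau.
by case: (u + a == 8)%N; rewrite ?add0r ?mulr1 ?mulr0.
Qed.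

Lemma PflipE (M : 'M[F]_9) i a : (Pflip F *m M) i a = M (pi9 i) a.
Proof.
rewrite mxE (bigD1 (pi9 i)) //= big1 ?addr0.
  by rewrite mxE pi9_val eqxx mul1r.
move=> c hc; rewrite /Pflip mxE; case: eqP => h; last by rewrite mul0r.
suff e : c = pi9 i by move: hc; rewrite e eqxx.
by apply/val_inj; rewrite /= pi9_val.
Qed.

Lemma sum_delta (f : 'I_9 -> B) x : \sum_a (a == x)%:R *: f a = f x.
Proof.
rewrite (bigD1 x) //= eqxx scale1r big1 ?addr0 //.
by move=> a /negbTE ->; rewrite scale0r.
Qed.

Lemma SumL (f : 'I_9 -> B) x y :
  \sum_a (2^-1 * ((a == x)%:R + (a == y)%:R)) *: f a = 2^-1 *: (f x + f y).
Proof.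
under eq_bigr => a _ do rewrite -scalerA scalerDl.
by rewrite -scaler_sumr big_split /= !sum_delta.
Qed.

Definition Rm := map_mx (fun c : F => c%:A) (Rmat 1 1 1) : 'M[B]_9.

Lemma RmL (M : 'M[B]_9) i j :
  (Rm *m M) i j = 2^-1 *: (M (pi9 i) j + M (rev_ord (pi9 i)) j).
Proof.
rewrite mxE -(SumL (fun a => M a j)); apply: eq_bigr => a _.
by rewrite mxE /Rmat PflipE RhatE mulr_algl.
Qed.

Lemma RmR (M : 'M[B]_9) i j :
  (M *m Rm) i j = 2^-1 *: (M i (pi9 j) + M i (pi9 (rev_ord j))).
Proof.
rewrite mxE -(SumL (fun a => M i a)); apply: eq_bigr => a _.
rewrite mxE /Rmat PflipE RhatE mulr_algr pi9_eq.
have -> : (j == rev_ord (pi9 a)) = (rev_ord j == pi9 a).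
  by rewrite -(inj_eq (@rev_ord_inj 9)) rev_ordK.
by rewrite (pi9_eq a (rev_ord j)).
Qed.

End Mat2.

Section RTT.
Variable F : numClosedFieldType.
Variable B : algType F.

Lemma entry (T : 'M[B]_3) i j :
  ((Rm F B *m (T1 T *m T2 T)) i j = ((T2 T *m T1 T) *m Rm F B) i j) <->
  (T (inord (2 - i %% 3)) (inord (j %/ 3)) * T (inord (2 - i %/ 3)) (inord (j %% 3))
   = T (inord (i %% 3)) (inord (2 - j %/ 3)) * T (inord (i %/ 3)) (inord (2 - j %% 3))).
Proof.
rewrite RmL RmR !mulT12 !mulT21.
rewrite ?N2d ?N2e ?pi9_div ?pi9_mod ?N2d ?N2e.
split; last by move=> ->.
by move/(scalerI (invr_neq0 two_neq0))/addrI.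
Qed.

Lemma RTT_Q1 (g : 'I_9 -> B) : RTT_rel 1 1 1 g <-> Q1 (fun a c => Tmat g a c).
Proof.
rewrite /RTT_rel /= -mulmxA.
have core : (Rm F B *m (T1 (Tmat g) *m T2 (Tmat g)) = T2 (Tmat g) *m T1 (Tmat g) *m Rm F B) <->
   forall i j : 'I_9, ((Rm F B *m (T1 (Tmat g) *m T2 (Tmat g))) i j = ((T2 (Tmat g) *m T1 (Tmat g)) *m Rm F B) i j).
  by split => [-> //|H]; apply/matrixP => i j; apply: H.
change (Rm F B *m (T1 (Tmat g) *m T2 (Tmat g)) = T2 (Tmat g) *m T1 (Tmat g) *m Rm F B <-> Q1 (fun a c => Tmat g a c)).
apply: (iff_trans core).
split.
- move=> H a b c d.
  pose i : 'I_9 := inord (3 * a + b); pose j : 'I_9 := inord (3 * c + d).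
  have hi : (i = 3 * a + b :> nat)%N by rewrite /i inordK // N1a.
  have hj : (j = 3 * c + d :> nat)%N by rewrite /j inordK // N1a.
  have := (proj1 (entry _ i j) (H i j)).
  rewrite hi hj !N1b ?N1c // !inord_rev // !inord_val.
  by move=> ->.
- move=> H i j; apply/entry.
  by rewrite !inord_rev ?N2a ?N2b //; apply: H.
Qed.
End RTT.

Section Gens.
Variable F : numClosedFieldType.
Variable B : algType F.
Variables k l m n p q r s t : B.
Local Notation g := (gensT k l m n p q r s t).
Local Notation gt := (gensTilde k l m n p q r s t).
Local Notation T := (fun a c => Tmat g a c).

Lemma gensT_inord x : (x < 9)%N -> g (inord x) = nth 0 [:: k; p; l; q; r; s; m; t; n] x.
Proof. by move=> h; rewrite /gensT inordK. Qed.

Lemma TE (a c : 'I_3) : T a c = nth 0 [:: k; p; l; q; r; s; m; t; n] (3 * a + c).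
Proof. by rewrite /Tmat mxE gensT_inord ?N1a. Qed.

Lemma xT_X1 (a c : 'I_3) : exists i, xT T a c = X1 gt i.
Proof.
rewrite /xT !TE.
case: a => [[|[|[|a]]] ha] //; case: c => [[|[|[|c]]] hc] //.
- by exists (@Ordinal 5 0 isT).
- by exists (@Ordinal 5 2 isT).
- by exists (@Ordinal 5 1 isT).
- by exists (@Ordinal 5 3 isT).
- by exists (@Ordinal 5 4 isT); rewrite /X1 /= half_double.
- by exists (@Ordinal 5 3 isT); rewrite addrC.
- by exists (@Ordinal 5 1 isT); rewrite addrC.
- by exists (@Ordinal 5 2 isT); rewrite addrC.
- by exists (@Ordinal 5 0 isT); rewrite addrC.
Qed.

Lemma yT_X2 (a c : 'I_3) :
  yT T a c = 0 \/ exists j, yT T a c = X2 gt j \/ yT T a c = - X2 gt j.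
Proof.
rewrite /yT !TE.
case: a => [[|[|[|a]]] ha] //; case: c => [[|[|[|c]]] hc] //.
- by right; exists (@Ordinal 4 1 isT); left.
- by right; exists (@Ordinal 4 3 isT); left.
- by right; exists (@Ordinal 4 0 isT); left.
- by right; exists (@Ordinal 4 2 isT); left.
- by left; rewrite /= subrr scaler0.
- by right; exists (@Ordinal 4 2 isT); right; rewrite -scalerN opprB.
- by right; exists (@Ordinal 4 0 isT); right; rewrite -scalerN opprB.
- by right; exists (@Ordinal 4 3 isT); right; rewrite -scalerN opprB.
- by right; exists (@Ordinal 4 1 isT); right; rewrite -scalerN opprB.
Qed.

Lemma X1_xT (i : 'I_5) : exists a c, X1 gt i = xT T a c.
Proof.
rewrite /xT.
case: i => [[|[|[|[|[|i]]]]] hi] //.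
- by exists (@Ordinal 3 0 isT), (@Ordinal 3 0 isT); rewrite !TE.
- by exists (@Ordinal 3 0 isT), (@Ordinal 3 2 isT); rewrite !TE.
- by exists (@Ordinal 3 0 isT), (@Ordinal 3 1 isT); rewrite !TE.
- by exists (@Ordinal 3 1 isT), (@Ordinal 3 0 isT); rewrite !TE.
- by exists (@Ordinal 3 1 isT), (@Ordinal 3 1 isT); rewrite !TE /= half_double.
Qed.

Lemma X2_yT (j : 'I_4) : exists a c, X2 gt j = yT T a c.
Proof.
rewrite /yT.
case: j => [[|[|[|[|j]]]] hj] //.
- by exists (@Ordinal 3 0 isT), (@Ordinal 3 2 isT); rewrite !TE.
- by exists (@Ordinal 3 0 isT), (@Ordinal 3 0 isT); rewrite !TE.
- by exists (@Ordinal 3 1 isT), (@Ordinal 3 0 isT); rewrite !TE.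
- by exists (@Ordinal 3 0 isT), (@Ordinal 3 1 isT); rewrite !TE.
Qed.

Lemma Q2_rel40 : Q2 T <-> rel40 gt.
Proof.
split.
- move=> H i j.
  have [a [c ->]] := X1_xT i; have [b [d ->]] := X2_yT j.
  by split; [case: (H a c b d) | case: (H b d a c)].
- move=> H a c b d.
  have [i ->] := xT_X1 a c; have [i' ->] := xT_X1 b d.
  split.
    case: (yT_X2 b d) => [->|[j [->|->]]]; first by rewrite mulr0.
      by case: (H i j).
    by rewrite mulrN; case: (H i j) => ->; rewrite oppr0.
  case: (yT_X2 a c) => [->|[j [->|->]]]; first by rewrite mul0r.
    by case: (H i' j).
  by rewrite mulNr; case: (H i' j) => _ ->; rewrite oppr0.
Qed.

Lemma RTT_rel40 : RTT_rel 1 1 1 g <-> rel40 gt.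
Proof.
apply: (iff_trans (@RTT_Q1 F B g)); apply: (iff_trans (@Q1_equiv F B _)); exact: Q2_rel40.
Qed.
End Gens.
Section Hom.
Variable F : numClosedFieldType.

Lemma hom0 {A C : algType F} {f : A -> C} : alg_hom f -> f 0 = 0.
Proof. by case=> _ _ _ hZ; rewrite -(scale0r (0 : A)) hZ scale0r. Qed.
Lemma homN {A C : algType F} {f : A -> C} : alg_hom f -> forall x, f (- x) = - f x.
Proof. by case=> _ _ _ hZ x; rewrite -scaleN1r hZ scaleN1r. Qed.
Lemma homB {A C : algType F} {f : A -> C} : alg_hom f -> forall x y, f (x - y) = f x - f y.
Proof. by move=> hf x y; case: (hf) => hD _ _ _; rewrite hD (homN hf). Qed.
Lemma homD {A C : algType F} {f : A -> C} : alg_hom f -> forall x y, f (x + y) = f x + f y.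
Proof. by case. Qed.
Lemma homM {A C : algType F} {f : A -> C} : alg_hom f -> forall x y, f (x * y) = f x * f y.
Proof. by case. Qed.
Lemma homZ {A C : algType F} {f : A -> C} : alg_hom f -> forall c x, f (c *: x) = c *: f x.
Proof. by case. Qed.
Lemma homA {A C : algType F} {f : A -> C} : alg_hom f -> forall c, f (c%:A) = c%:A.
Proof. by case=> _ _ h1 hZ c; rewrite hZ h1. Qed.

Lemma homAe {A : algType F} {e : A -> F^o} : alg_hom e -> forall c, e (c%:A) = c.
Proof. by move=> he c; rewrite (homA he); apply: mulr1. Qed.

Lemma hom_id (A : algType F) : alg_hom (fun x : A => x).
Proof. by []. Qed.
Lemma hom_comp (A C D : algType F) (f : A -> C) (h : C -> D) :
  alg_hom f -> alg_hom h -> alg_hom (fun x => h (f x)).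
Proof.
case=> fD fM f1 fZ [hD hM h1 hZ]; split.
- by move=> x y; rewrite fD hD.
- by move=> x y; rewrite fM hM.
- by rewrite f1 h1.
- by move=> c x; rewrite fZ hZ.
Qed.
Lemma hom_scal (A C : algType F) (e : A -> F^o) :
  alg_hom e -> alg_hom (fun x => (e x)%:A : C).
Proof.
case=> eD eM e1 eZ; split.
- by move=> x y; rewrite eD scalerDl.
- by move=> x y; rewrite eM mulr_algl scalerA.
- by rewrite e1 scale1r.
- by move=> c x; rewrite eZ scalerA.
Qed.

Lemma hom_eq_gen (A C : algType F) n (g : 'I_n -> A) (f h : A -> C) :
  alg_hom f -> alg_hom h -> (forall i, f (g i) = h (g i)) ->
  forall x, generated g x -> f x = h x.
Proof.
move=> hf hh e x; elim => [i|c|y z _ IHy _ IHz|y z _ IHy _ IHz] //.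
- by rewrite !homA.
- by rewrite !homD // IHy IHz.
- by rewrite !homM // IHy IHz.
Qed.

Lemma gen_conv (A : algType F) n (g : 'I_n -> A) x y :
  x = y -> generated g y -> generated g x.
Proof. by move=> ->. Qed.
Lemma gen_sub (A : algType F) n (g : 'I_n -> A) x y :
  generated g x -> generated g y -> generated g (x - y).
Proof.
move=> hx hy; apply: gen_add => //.
rewrite -scaleN1r -mulr_algl; apply: gen_mul => //; exact: gen_scal.
Qed.

Lemma shiftL (C : algType F) (u v : C) (a b : F) :
  (u + a%:A) * (v + b%:A) - (a * b)%:A = u * v + b *: u + a *: v.
Proof.
by rewrite mulrDl !mulrDr mulr_algr !mulr_algl scalerA !addrA addrK.
Qed.

Lemma U_mul (A C : algType F) (f : A -> C) (e : A -> F^o) :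
  alg_hom f -> alg_hom e -> forall a b,
  f (a * b) - (e (a * b))%:A =
  (f a - (e a)%:A) * (f b - (e b)%:A) + e b *: (f a - (e a)%:A) + e a *: (f b - (e b)%:A).
Proof.
move=> hf he a b.
have := @shiftL C (f a - (e a)%:A) (f b - (e b)%:A) (e a) (e b); rewrite !subrK => <-.
by rewrite (homM hf) (homM he).
Qed.

Lemma UV0 (A B1 B2 : algType F) n1 n2 (x1 : 'I_n1 -> B1) (x2 : 'I_n2 -> B2)
  (f1 : B1 -> A) (e1 : B1 -> F^o) (f2 : B2 -> A) (e2 : B2 -> F^o) :
  alg_hom f1 -> alg_hom e1 -> alg_hom f2 -> alg_hom e2 ->
  (forall i, e1 (x1 i) = 0) -> (forall j, e2 (x2 j) = 0) ->
  (forall i j, f1 (x1 i) * f2 (x2 j) = 0) ->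
  forall z w, generated x1 z -> generated x2 w ->
  (f1 z - (e1 z)%:A) * (f2 w - (e2 w)%:A) = 0.
Proof.
move=> hf1 he1 hf2 he2 hx1 hx2 rel z w gz gw.
have inner : forall i, f1 (x1 i) * (f2 w - (e2 w)%:A) = 0.
  move=> i; elim: gw => [j|c|y y' _ IHy _ IHy'|y y' _ IHy _ IHy'].
  - by rewrite hx2 scale0r subr0 rel.
  - by rewrite (homA hf2) (homAe he2) subrr mulr0.
  - rewrite (homD hf2) (homD he2) scalerDl opprD addrACA mulrDr IHy IHy'.
    by rewrite addr0.
  - rewrite U_mul // 2!mulrDr mulrA IHy mul0r -!scalerAr IHy IHy' !scaler0.
    by rewrite !addr0.
elim: gz => [i|c|y y' _ IHy _ IHy'|y y' _ IHy _ IHy'].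
- by rewrite hx1 scale0r subr0 inner.
- by rewrite (homA hf1) (homAe he1) subrr mul0r.
- rewrite (homD hf1) (homD he1) scalerDl opprD addrACA mulrDl IHy IHy'.
  by rewrite addr0.
- rewrite U_mul // 2!mulrDl -mulrA IHy' mulr0 -!scalerAl IHy IHy' !scaler0.
  by rewrite !addr0.
Qed.

Lemma expand (C : algType F) (u1 v1 u2 v2 : C) (a b : F) :
  u1 * v2 = 0 -> v1 * u2 = 0 ->
  (u1 + v1 + a%:A) * (u2 + v2 + b%:A) =
  (u1 * u2 + b *: u1 + a *: u2) + (v1 * v2 + b *: v1 + a *: v2) + (a * b)%:A.
Proof.
move=> h1 h2.
rewrite !mulrDl !mulrDr h1 h2 !mulr_algr !mulr_algl scalerA !addr0.
by rewrite add0r [b * a]mulrC [in RHS]addrACA !addrA.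
Qed.

End Hom.
Arguments hom0 {F A C f}.
Arguments homN {F A C f}.
Arguments homB {F A C f}.
Arguments homD {F A C f}.
Arguments homM {F A C f}.
Arguments homZ {F A C f}.
Arguments homA {F A C f}.
Arguments homAe {F A e}.
Arguments hom_id {F A}.
Arguments hom_comp {F A C D f h}.
Arguments hom_scal {F A C e}.
Arguments hom_eq_gen {F A C n g f h}.
Arguments U_mul {F A C f e}.
Arguments UV0 {F A B1 B2 n1 n2 x1 x2 f1 e1 f2 e2}.
Arguments expand {F C u1 v1 u2 v2 a b}.
Arguments gen_conv {F A n g x y}.
Arguments gen_sub {F A n g x y}.

Section Idx.
Variable F : numClosedFieldType.

Definition h1f (B1 : algType F) (x1 : 'I_5 -> B1) : 'I_9 -> B1 :=
  fun i => if (i < 5)%N then x1 (inord i) else 0.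
Definition h2f (B2 : algType F) (x2 : 'I_4 -> B2) : 'I_9 -> B2 :=
  fun i => if (i < 5)%N then 0 else x2 (inord (i - 5)).
Arguments h1f {B1}.
Arguments h2f {B2}.

Lemma h1_X1 (B1 : algType F) (x1 : 'I_5 -> B1) (i : 'I_5) : h1f x1 (lshift 4 i) = x1 i.
Proof. by rewrite /h1f /= ltn_ord inord_val. Qed.
Lemma h1_X2 (B1 : algType F) (x1 : 'I_5 -> B1) (j : 'I_4) : h1f x1 (rshift 5 j) = 0.
Proof. by rewrite /h1f. Qed.
Lemma h2_X1 (B2 : algType F) (x2 : 'I_4 -> B2) (i : 'I_5) : h2f x2 (lshift 4 i) = 0.
Proof. by rewrite /h2f /= ltn_ord. Qed.
Lemma h2_X2 (B2 : algType F) (x2 : 'I_4 -> B2) (j : 'I_4) : h2f x2 (rshift 5 j) = x2 j.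
Proof. by rewrite /h2f /= ?ltnNge ?leq_addr /= addKn inord_val. Qed.

Lemma rel40_h1 (B1 : algType F) (x1 : 'I_5 -> B1) : rel40 (h1f x1).
Proof. by move=> i j; rewrite /X1 /X2 h1_X1 h1_X2 mulr0 mul0r. Qed.
Lemma rel40_h2 (B2 : algType F) (x2 : 'I_4 -> B2) : rel40 (h2f x2).
Proof. by move=> i j; rewrite /X1 /X2 h2_X1 h2_X2 mulr0 mul0r. Qed.

Lemma e_h1 (B1 : algType F) (x1 : 'I_5 -> B1) (e : B1 -> F^o) : alg_hom e ->
  (forall i, e (x1 i) = 0) -> forall i, e (h1f x1 i) = 0.
Proof. move=> he hx i; rewrite /h1f; case: ifP => _; [exact: hx | exact: (hom0 he)]. Qed.
Lemma e_h2 (B2 : algType F) (x2 : 'I_4 -> B2) (e : B2 -> F^o) : alg_hom e ->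
  (forall j, e (x2 j) = 0) -> forall i, e (h2f x2 i) = 0.
Proof. move=> he hx i; rewrite /h2f; case: ifP => _; [exact: (hom0 he) | exact: hx]. Qed.

Lemma split9 (i : 'I_9) :
  ((i < 5)%N /\ i = lshift 4 (inord i : 'I_5)) \/
  (~~ (i < 5)%N /\ i = rshift 5 (inord (i - 5) : 'I_4)).
Proof.
case: (ltnP i 5) => hi; [left|right]; split => //; apply/val_inj => /=.
  by rewrite inordK.
rewrite inordK ?subnKC //.
by rewrite ltn_subLR.
Qed.

Lemma hom_tilde (A C : algType F) (f : A -> C) : alg_hom f ->
  forall (k l m n p q r s t : A) i,
  f (gensTilde k l m n p q r s t i) =
  gensTilde (f k) (f l) (f m) (f n) (f p) (f q) (f r) (f s) (f t) i.
Proof.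
move=> hf k l m n p q r s t.
case=> [[|[|[|[|[|[|[|[|[|i]]]]]]]]] hi] //=;
  by rewrite /gensTilde /= ?(homZ hf) ?(homB hf) ?(homD hf).
Qed.
End Idx.
Arguments h1f {F B1}.
Arguments h2f {F B2}.
Arguments h1_X1 {F B1}.
Arguments h1_X2 {F B1}.
Arguments h2_X1 {F B2}.
Arguments h2_X2 {F B2}.
Arguments rel40_h1 {F B1}.
Arguments rel40_h2 {F B2}.
Arguments e_h1 {F B1 x1 e}.
Arguments e_h2 {F B2 x2 e}.
Arguments hom_tilde {F A C f}.

Theorem mainTheorem5 (F : numClosedFieldType) (A : algType F)
    (k l m n p q r s t : A) :
  presents (@RTT_rel F 1 1 1) (gensT k l m n p q r s t) ->
  let g := gensTilde k l m n p q r s t in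
  presents (@rel40 F) g
  /\ (forall (B1 : algType F) (x1 : 'I_5 -> B1), free_on x1 ->
        forall f : B1 -> A, alg_hom f -> (forall i, f (x1 i) = X1 g i) ->
        injective f)
  /\ (forall (B2 : algType F) (x2 : 'I_4 -> B2), free_on x2 ->
        forall f : B2 -> A, alg_hom f -> (forall j, f (x2 j) = X2 g j) ->
        injective f)
  /\ (forall (B1 : algType F) (x1 : 'I_5 -> B1) (B2 : algType F)
             (x2 : 'I_4 -> B2),
        free_on x1 -> free_on x2 ->
        forall (e1 : B1 -> F^o) (e2 : B2 -> F^o),
        alg_hom e1 -> (forall i, e1 (x1 i) = 0) ->
        alg_hom e2 -> (forall j, e2 (x2 j) = 0) ->
        exists (phi1 : A -> B1) (phi2 : A -> B2),
          [/\ alg_hom phi1, alg_hom phi2,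
              injective (fun a => (phi1 a, phi2 a)) &
              forall (b1 : B1) (b2 : B2),
                e1 b1 = e2 b2 <-> exists a, phi1 a = b1 /\ phi2 a = b2]).
Proof.
move=> HA g.
case: HA => relA genA univA.
have rel40A : rel40 g := proj1 (@RTT_rel40 F A k l m n p q r s t) relA.
have genG : forall x, generated g x.
  move=> x; elim: (genA x) => [i|c|y z _ hy _ hz|y z _ hy _ hz]; last first.
  - exact: gen_mul.
  - exact: gen_add.
  - exact: gen_scal.
  have G : forall j : 'I_9, generated g (g j) by move=> j; apply: gen_gen.
  case: i => [[|[|[|[|[|[|[|[|[|i]]]]]]]]] hi] //; rewrite /gensT /=.
  - apply: (gen_conv (half_split k n)); apply: gen_add;
      [exact: (G (@Ordinal 9 0 isT)) | exact: (G (@Ordinal 9 6 isT))].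
  - apply: (gen_conv (half_split p t)); apply: gen_add;
      [exact: (G (@Ordinal 9 2 isT)) | exact: (G (@Ordinal 9 8 isT))].
  - apply: (gen_conv (half_split l m)); apply: gen_add;
      [exact: (G (@Ordinal 9 1 isT)) | exact: (G (@Ordinal 9 5 isT))].
  - apply: (gen_conv (half_split q s)); apply: gen_add;
      [exact: (G (@Ordinal 9 3 isT)) | exact: (G (@Ordinal 9 7 isT))].
  - exact: (G (@Ordinal 9 4 isT)).
  - apply: (gen_conv (half_split2 q s)); apply: gen_sub;
      [exact: (G (@Ordinal 9 3 isT)) | exact: (G (@Ordinal 9 7 isT))].
  - apply: (gen_conv (half_split2 l m)); apply: gen_sub;
      [exact: (G (@Ordinal 9 1 isT)) | exact: (G (@Ordinal 9 5 isT))].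
  - apply: (gen_conv (half_split2 p t)); apply: gen_sub;
      [exact: (G (@Ordinal 9 2 isT)) | exact: (G (@Ordinal 9 8 isT))].
  - apply: (gen_conv (half_split2 k n)); apply: gen_sub;
      [exact: (G (@Ordinal 9 0 isT)) | exact: (G (@Ordinal 9 6 isT))].
have univ40 : forall (B0 : algType F) (h : 'I_9 -> B0), rel40 h ->
    exists f : A -> B0, alg_hom f /\ forall i, f (g i) = h i.
  move=> B0 h hrel.
  pose h0 := h (@Ordinal 9 0 isT). pose h1 := h (@Ordinal 9 1 isT).
  pose h2 := h (@Ordinal 9 2 isT). pose h3 := h (@Ordinal 9 3 isT).
  pose h4 := h (@Ordinal 9 4 isT). pose h5 := h (@Ordinal 9 5 isT).
  pose h6 := h (@Ordinal 9 6 isT). pose h7 := h (@Ordinal 9 7 isT).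
  pose h8 := h (@Ordinal 9 8 isT).
  have back : forall i, gensTilde (h0 + h6) (h1 + h5) (h1 - h5) (h0 - h6)
      (h2 + h8) (h3 + h7) h4 (h3 - h7) (h2 - h8) i = h i.
    case=> [[|[|[|[|[|[|[|[|[|i]]]]]]]]] hi] //; rewrite (bool_irrelevance hi isT);
      by rewrite /gensTilde /= ?half_pp ?half_mm.
  have hrel' : rel40 (gensTilde (h0 + h6) (h1 + h5) (h1 - h5) (h0 - h6)
      (h2 + h8) (h3 + h7) h4 (h3 - h7) (h2 - h8)).
    by move=> i j; rewrite /X1 /X2 !back; exact: hrel.
  have := proj2 (@RTT_rel40 F B0 _ _ _ _ _ _ _ _ _) hrel'.
  move/univA => [f [hf hfg]].
  exists f; split => // i.
  have fk : f k = h0 + h6 := hfg (@Ordinal 9 0 isT).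
  have fp : f p = h2 + h8 := hfg (@Ordinal 9 1 isT).
  have fl : f l = h1 + h5 := hfg (@Ordinal 9 2 isT).
  have fq : f q = h3 + h7 := hfg (@Ordinal 9 3 isT).
  have fr : f r = h4 := hfg (@Ordinal 9 4 isT).
  have fs : f s = h3 - h7 := hfg (@Ordinal 9 5 isT).
  have fm : f m = h1 - h5 := hfg (@Ordinal 9 6 isT).
  have ft : f t = h2 - h8 := hfg (@Ordinal 9 7 isT).
  have fn : f n = h0 - h6 := hfg (@Ordinal 9 8 isT).
  by rewrite -back /g hom_tilde // fk fl fm fn fp fq fr fs ft.
have inv1 : forall (B1 : algType F) (x1 : 'I_5 -> B1), (forall z, generated x1 z) ->
    forall (phi : A -> B1) (f : B1 -> A), alg_hom phi -> alg_hom f ->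
    (forall i, phi (g i) = h1f x1 i) -> (forall i, f (x1 i) = X1 g i) ->
    forall z, phi (f z) = z.
  move=> B1 x1 gen1 phi f hp hf hpg hfx z.
  apply: (hom_eq_gen (hom_comp hf hp) hom_id _ z (gen1 z)) => i.
  by rewrite hfx /X1 hpg h1_X1.
have inv2 : forall (B2 : algType F) (x2 : 'I_4 -> B2), (forall z, generated x2 z) ->
    forall (phi : A -> B2) (f : B2 -> A), alg_hom phi -> alg_hom f ->
    (forall i, phi (g i) = h2f x2 i) -> (forall j, f (x2 j) = X2 g j) ->
    forall z, phi (f z) = z.
  move=> B2 x2 gen2 phi f hp hf hpg hfx z.
  apply: (hom_eq_gen (hom_comp hf hp) hom_id _ z (gen2 z)) => i.
  by rewrite hfx /X2 hpg h2_X2.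
split; first by split.
split.
  move=> B1 x1 [_ gen1 _] f hf hfx.
  have [phi [hp hpg]] := univ40 B1 (h1f x1) (rel40_h1 x1).
  move=> a b /(congr1 phi).
  by rewrite !(inv1 B1 x1 gen1 phi f hp hf hpg hfx).
split.
  move=> B2 x2 [_ gen2 _] f hf hfx.
  have [phi [hp hpg]] := univ40 B2 (h2f x2) (rel40_h2 x2).
  move=> a b /(congr1 phi).
  by rewrite !(inv2 B2 x2 gen2 phi f hp hf hpg hfx).
move=> B1 x1 B2 x2 [_ gen1 free1] [_ gen2 free2] e1 e2 he1 hx1 he2 hx2.
have [phi1 [hp1 hpg1]] := univ40 B1 (h1f x1) (rel40_h1 x1).
have [phi2 [hp2 hpg2]] := univ40 B2 (h2f x2) (rel40_h2 x2).
have [f1 [hf1 hfx1]] := free1 A (X1 g) I.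
have [f2 [hf2 hfx2]] := free2 A (X2 g) I.
have i1 := inv1 B1 x1 gen1 phi1 f1 hp1 hf1 hpg1 hfx1.
have i2 := inv2 B2 x2 gen2 phi2 f2 hp2 hf2 hpg2 hfx2.
have c12 : forall z, phi1 (f2 z) = (e2 z)%:A.
  move=> z; apply: (hom_eq_gen (hom_comp hf2 hp1) (hom_scal he2) _ z (gen2 z)) => j.
  by rewrite hfx2 /X2 hpg1 h1_X2 hx2 scale0r.
have c21 : forall z, phi2 (f1 z) = (e1 z)%:A.
  move=> z; apply: (hom_eq_gen (hom_comp hf1 hp2) (hom_scal he1) _ z (gen1 z)) => j.
  by rewrite hfx1 /X1 hpg2 h2_X1 hx1 scale0r.
have eq12 : forall a, e1 (phi1 a) = e2 (phi2 a).
  move=> a; apply: (hom_eq_gen (hom_comp hp1 he1) (hom_comp hp2 he2) _ a (genG a)) => i.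
  by rewrite hpg1 hpg2 (e_h1 he1 hx1) (e_h2 he2 hx2).
have UV : forall z w, (f1 z - (e1 z)%:A) * (f2 w - (e2 w)%:A) = 0.
  move=> z w; apply: (UV0 hf1 he1 hf2 he2 hx1 hx2 _ z w (gen1 z) (gen2 w)).
  by move=> i j; rewrite hfx1 hfx2; case: (rel40A i j).
have VU : forall z w, (f2 w - (e2 w)%:A) * (f1 z - (e1 z)%:A) = 0.
  move=> z w; apply: (UV0 hf2 he2 hf1 he1 hx2 hx1 _ w z (gen2 w) (gen1 z)).
  by move=> j i; rewrite hfx1 hfx2; case: (rel40A i j).
have form : forall z1 z2, e1 z1 = e2 z2 ->
    f1 z1 + f2 z2 - (e1 z1)%:A = (f1 z1 - (e1 z1)%:A) + (f2 z2 - (e2 z2)%:A) + (e1 z1)%:A.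
  by move=> z1 z2 e; rewrite -e -[RHS]addrA subrK addrAC.
pose psi a := f1 (phi1 a) + f2 (phi2 a) - (e1 (phi1 a))%:A.
have psiK : forall a, psi a = a.
  move=> a; elim: (genG a) => [i|c|x y _ IHx _ IHy|x y _ IHx _ IHy].
  - rewrite /psi hpg1 hpg2.
    case: (split9 i) => [[hi ei]|[hi ei]]; rewrite /h1f /h2f.
      rewrite hi /= (hom0 hf2) addr0 hx1 scale0r subr0 hfx1 /X1.
      by rewrite -ei.
    rewrite (negbTE hi) /= (hom0 hf1) add0r (hom0 he1) scale0r subr0 hfx2 /X2.
    by rewrite -ei.
  - by rewrite /psi (homA hp1) (homA hp2) (homA hf1) (homA hf2) (homAe he1) addrK.
  - rewrite /psi (homD hp1) (homD hp2) (homD hf1) (homD hf2) (homD he1) scalerDl.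
    rewrite (addrACA (f1 (phi1 x)) (f1 (phi1 y))) opprD (addrACA (f1 (phi1 x) + f2 (phi2 x))).
    by move: IHx IHy; rewrite /psi => -> ->.
  - rewrite -{2}IHx -{2}IHy /psi (form _ _ (eq12 (x * y))) (form _ _ (eq12 x)) (form _ _ (eq12 y)).
    rewrite (expand (UV _ _) (VU _ _)).
    rewrite (homM hp1) (homM hp2) (U_mul hf1 he1) (U_mul hf2 he2) (homM he1).
    by rewrite -!eq12.
exists phi1, phi2; split => //.
  move=> a b [ha hb].
  by rewrite -[a]psiK -[b]psiK /psi ha hb.
move=> b1 b2; split.
  move=> he; exists (f1 b1 + f2 b2 - (e1 b1)%:A); split.
    by rewrite (homB hp1) (homD hp1) i1 c12 (homA hp1) -he addrK.
  by rewrite (homB hp2) (homD hp2) c21 i2 (homA hp2) [_ + b2]addrC addrK.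
by case=> a [<- <-]; apply: eq12.
Qed.
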